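(* Let $s\in\mathbb N$ and $k,n\in\mathbb N_0$. (i) For $s\le j\le n/2$ and $1\le\ell\le a^d_{n-2j}$, $$P^{-s,n}_{j,\ell}(x)=\frac{(1-n-\frac d2)_j}{(-j)_s\,(1-n-\frac d2+2s)_{j-s}}(\|x\|^2-1)^s\,P^{s,n-2s}_{j-s,\ell}(x).$$ (ii) For $0\le j\le n/2$ and $1\le\ell\le a^d_{n-2j}$, $$\Delta^kP^{-s,n}_{j,\ell}(x)=4^k(n+\tfrac d2-2k)_{2k}\,P^{2k-s,n-2k}_{j-k,\ell}(x)+q(\|x\|^2)\,Y^{n-2j}_\ell(x),$$ where $q$ is a univariate polynomial of degree at most $j_0-k-1$ (so $q=0$ if $j_0-k-1<0$), with $j_0=s+j-n-\frac d2+1$ if this number belongs to $\{1,2,\dots,j\}$ and $j_0=0$ otherwise. In particular $q=0$ if $j+k\ge s$.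
   Context: $(a)_0=1$, $(a)_m=a(a+1)\cdots(a+m-1)$. $\mathcal H^d_m$: homogeneous harmonic polynomials of degree $m$ in $d$ variables, $a^d_m=\dim\mathcal H^d_m$, $\{Y^m_\ell\}_{\ell=1}^{a^d_m}$ a basis of $\mathcal H^d_m$ orthonormal in $L^2$ of the normalized surface measure on $\mathbb S^{d-1}$. Generalized Jacobi polynomials: for $\alpha,\beta\in\mathbb R$, $j\in\mathbb N_0$, let $j_0=-j-\alpha-\beta$ if this number lies in $\{1,\dots,j\}$ and $j_0=0$ otherwise; $\widehat P^{(\alpha,\beta)}_j(t)=\sum_{k=j_0}^j\frac{(k+\alpha+1)_{j-k}}{(j-k)!\,k!\,(j+\alpha+\beta+k+1)_{j-k}}\big(\frac{t-1}2\big)^k$, and $\widehat P^{(\alpha,\beta)}_j=0$ for negative integers $j$. For $\mu\in\mathbb R$, $n\in\mathbb N_0$, $0\le j\le n/2$, $1\le\ell\le a^d_{n-2j}$: $P^{\mu,n}_{j,\ell}(x)=(n-j+\tfrac d2)_j\,\widehat P^{(\mu,n-2j+\frac d2-1)}_j(2\|x\|^2-1)\,Y^{n-2j}_\ell(x)$; by convention $P^{\mu,n}_{j,\ell}=0$ if $j<0$ or $j>n/2$. Note $P^{2k-s,n-2k}_{j-k,\ell}$ involves the harmonic $Y^{n-2j}_\ell$. *)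

(* Defs.v *)
From HB Require Import structures.
From mathcomp Require Import all_boot all_order all_algebra.
From mathcomp Require Import mpoly.
Set Implicit Arguments. Unset Strict Implicit. Unset Printing Implicit Defensive.
Import Order.TTheory GRing.Theory Num.Theory.
Local Open Scope ring_scope.

Section Defs.
Variable R : realFieldType.

Definition poch (a : R) (m : nat) : R := \prod_(i < m) (a + i%:R).

Definition jzero (x : R) (j : nat) : nat :=
  if [pick m : 'I_j.+1 | (0 < m)%N && (x == (m : nat)%:R)] is Some m then val m
  else 0%N.

Definition gjacobi (a b : R) (j : nat) : {poly R} :=
  \sum_(jzero (- j%:R - a - b) j <= k < j.+1)
     (poch (k%:R + a + 1) (j - k) /
        ((j - k)`!%:R * k`!%:R * poch (j%:R + a + b + k%:R + 1) (j - k)))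
     *: ((2%:R)^-1 *: ('X - 1)) ^+ k.

Variable d : nat.

Definition pevalMP (p : {poly R}) (t : {mpoly R[d]}) : {mpoly R[d]} :=
  (map_poly (@mpolyC d R) p).[t].

Definition normsq : {mpoly R[d]} := \sum_(i < d) 'X_i ^+ 2.

Definition lap (p : {mpoly R[d]}) : {mpoly R[d]} :=
  \sum_(i < d) (p^`M(i))^`M(i).

(* P^{mu,n}_{j,l} where Y plays the role of the harmonic Y^{n-2j}_l;
   it is 0 when j < 0 or j > n/2. *)
Definition Pfam (mu : R) (n : nat) (j : int) (Y : {mpoly R[d]}) : {mpoly R[d]} :=
  match j with
  | Posz j' =>
      if (2 * j' <= n)%N then
        poch (n%:R - j'%:R + d%:R / 2%:R) j' *:
          (pevalMP (gjacobi mu (n%:R - 2%:R * j'%:R + d%:R / 2%:R - 1) j')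
                   (2%:R *: normsq - 1) * Y)
      else 0
  | Negz _ => 0
  end.

End Defs.

(* Main.v *)
Require Import Defs.
From HB Require Import structures.
From mathcomp Require Import all_boot all_order all_algebra.
From mathcomp Require Import mpoly.
From mathcomp Require Import ring lra zify.
Import Order.TTheory GRing.Theory Num.Theory.
Set Implicit Arguments. Unset Strict Implicit. Unset Printing Implicit Defensive.
Local Open Scope ring_scope.



Section Uni.
Variable R : realFieldType.
Implicit Types (a b x : R).

Lemma poch0 a : poch a 0 = 1.
Proof. by rewrite /poch big_ord0. Qed.

Lemma pochS a n : poch a n.+1 = poch a n * (a + n%:R).
Proof. by rewrite /poch big_ord_recr. Qed.

Lemma pochSl a n : poch a n.+1 = a * poch (a + 1) n.
Proof.
rewrite /poch big_ord_recl /= addr0; congr (_ * _).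
by apply: eq_bigr => i _; rewrite /bump /= natrD -addrA addrC (addrC 1) -addrA.
Qed.

Lemma poch_eq0 a n : poch a n = 0 -> exists t, (t < n)%N /\ a + t%:R = 0.
Proof.
elim: n => [|n IH]; first by rewrite poch0 => /eqP; rewrite oner_eq0.
rewrite pochS => /eqP; rewrite mulf_eq0 => /orP [/eqP /IH [t [ht h]]|/eqP h].
  by exists t; split => //; lia.
by exists n.
Qed.

Lemma poch_gt0 a n : 0 < a -> 0 < poch a n.
Proof.
move=> a0; elim: n => [|n IH]; first by rewrite poch0.
rewrite pochS mulr_gt0 //; apply: (lt_le_trans a0); rewrite lerDl //.
Qed.

Lemma poch_refl a n : poch a n = (-1) ^+ n * poch (- a - n%:R + 1) n.
Proof.
elim: n a => [|n IH] a; first by rewrite !poch0 expr0 mulr1.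
rewrite pochS IH pochSl exprS.
have -> : - a - n.+1%:R + 1 + 1 = - a - n%:R + 1 by rewrite -addn1 natrD; ring.
rewrite -addn1 natrD; ring.
Qed.

Lemma poch_nat (m r : nat) : poch (m%:R + 1 : R) r * (m`!)%:R = ((m + r)`!)%:R.
Proof.
elim: r => [|r IH]; first by rewrite poch0 mul1r addn0.
rewrite pochS mulrAC IH addnS factS natrM mulrC; congr (_ * _).
by rewrite -addn1 !natrD; ring.
Qed.

Lemma jzero_spec x j : (jzero x j = 0%N) \/ 
   (x = (jzero x j)%:R /\ (0 < jzero x j <= j)%N).
Proof.
rewrite /jzero; case: pickP => [m /andP [m0 /eqP xm]|_]; last by left.
by right; split => //; rewrite m0 -ltnS ltn_ord.
Qed.

Lemma jzero_eq x j m : x = m%:R -> (0 < m <= j)%N -> jzero x j = m.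
Proof.
move=> -> /andP [m0 mj].
rewrite /jzero; case: pickP => [m' /andP [_ /eqP]|].
  by move/eqP; rewrite eqr_nat => /eqP.
have mj' : (m < j.+1)%N by [].
by move/(_ (Ordinal mj')) => /=; rewrite m0 eqxx.
Qed.

End Uni.



Section Uni2.
Variable R : realFieldType.
Implicit Types (a b x : R).

Definition ec (a b : R) (j k : nat) : R :=
  poch (k%:R + a + 1) (j - k) /
        ((j - k)`!%:R * k`!%:R * poch (j%:R + a + b + k%:R + 1) (j - k)).

Lemma fact_neq0 n : (n`!)%:R != 0 :> R.
Proof. by rewrite pnatr_eq0 -lt0n fact_gt0. Qed.

Lemma natS_neq0 n : (n.+1)%:R != 0 :> R.
Proof. by rewrite pnatr_eq0. Qed.

Lemma coef_step A B h (i r : nat) : B = h - 1 ->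
 let j := (i + r.+1)%N in
 4%:R * (ec A B j.+1 i.+2 * (i.+2)%:R * (i.+1)%:R + ec A B j.+1 i.+1 * (i.+1)%:R * i%:R)
   + 4%:R * h * (ec A B j.+1 i.+1 * (i.+1)%:R)
  = 4%:R * (h + j%:R) * ec (A + 2%:R) B j i
    + (if poch (j.+1%:R + A + B + i.+1%:R + 1) (j - i) == 0
       then 4%:R * ((i.+2)%:R * (i.+1)%:R * ec A B j.+1 i.+2) else 0).
Proof.
move=> -> j; rewrite /ec /j.
have -> : ((i + r.+1).+1 - i.+2 = r)%N by lia.
have -> : ((i + r.+1).+1 - i.+1 = r.+1)%N by lia.
have -> : ((i + r.+1) - i = r.+1)%N by lia.
rewrite (pochSl _ r) (pochSl (_ + _ + _ + _ + 1) r) (pochS (_ + (A + 2%:R) + 1) r).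
rewrite (pochSl (_ + (A + 2%:R) + _ + _ + 1) r).
have -> : i.+1%:R + A + 1 + 1 = i.+2%:R + A + 1.
  by rewrite -(addn1 i.+1) natrD; ring.
have -> : i%:R + (A + 2%:R) + 1 = i.+2%:R + A + 1.
  by rewrite -(addn1 i.+1) -(addn1 i) !natrD; ring.
have -> : (i + r.+1)%:R + (A + 2%:R) + (h - 1) + i%:R + 1 =
          (i + r.+1).+1%:R + A + (h - 1) + i.+1%:R + 1.
  by rewrite -(addn1 (i + r.+1)) -(addn1 i) !natrD; ring.
have -> : (i + r.+1).+1%:R + A + (h - 1) + i.+1%:R + 1 + 1 =
          (i + r.+1).+1%:R + A + (h - 1) + i.+2%:R + 1.
  by rewrite -(addn1 i.+1) natrD; ring.
set P := poch (i.+2%:R + A + 1) r.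
set D := poch ((i + r.+1).+1%:R + A + (h - 1) + i.+2%:R + 1) r.
set b := (i + r.+1).+1%:R + A + (h - 1) + i.+1%:R + 1.
rewrite !factS.
have Fi := fact_neq0 i; have Fr := fact_neq0 r.
have Ni := natS_neq0 i; have Ni2 := natS_neq0 i.+1; have Nr := natS_neq0 r.
case: ifP => [/eqP bD0|].
  rewrite bD0 !mulr0 !invr0 !mulr0 !mul0r !addr0; ring.
move/negbT; rewrite mulf_eq0 negb_or => /andP [b0 D0].
rewrite addr0.
rewrite !natrM.
rewrite /b in b0 *.
rewrite -[(i + r.+1).+1]addn1 -[i.+2]addn1 -[i.+1]addn1 -[r.+1]addn1 !natrD in b0 Ni Ni2 Nr *.
field.
by rewrite D0 Fi Fr Nr Ni Ni2 b0.
Qed.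

End Uni2.

Section Uni3.
Variable R : realFieldType.

Definition Qp (a b : R) (j : nat) : {poly R} := \poly_(k < j.+1) ec a b j k.

Definition Lu (c : R) (p : {poly R}) : {poly R} :=
  4%:R *: (('X + 1) * p^`()^`()) + c *: p^`().

Lemma coef_Lu c p i : (Lu c p)`_i =
  4%:R * (p`_i.+2 * (i.+2)%:R * (i.+1)%:R + p`_i.+1 * (i.+1)%:R * i%:R)
  + c * (p`_i.+1 * (i.+1)%:R).
Proof.
rewrite /Lu coefD !coefZ [(_ + 1) * _]mulrDl mul1r coefD coefXM.
case: i => [|i] /=; rewrite !coef_deriv; ring.
Qed.

Lemma size_Lu c p : (size (Lu c p) <= (size p).-1)%N.
Proof.
apply/leq_sizeP => i hi.
have h1 : (size p <= i.+1)%N by move: hi; case: (size p) => //= n; lia.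
have h2 : (size p <= i.+2)%N by lia.
rewrite coef_Lu (nth_default _ h1) (nth_default _ h2); ring.
Qed.

Lemma LuD c p q : Lu c (p + q) = Lu c p + Lu c q.
Proof. rewrite /Lu !derivD mulrDr !scalerDr; by rewrite addrACA. Qed.

Lemma LuZ c a p : Lu c (a *: p) = a *: Lu c p.
Proof.
rewrite /Lu !derivZ -scalerAr !scalerA (mulrC 4%:R) (mulrC c) -!scalerA.
by rewrite scalerDr.
Qed.

Lemma Lu0 c : Lu c 0 = 0.
Proof. by rewrite /Lu !deriv0 mulr0 !scaler0 addr0. Qed.

Definition Rr (A B : R) (j : nat) : {poly R} :=
  \poly_(i < j.+1) (if poch (j.+1%:R + A + B + i.+1%:R + 1) (j - i) == 0
       then 4%:R * ((i.+2)%:R * (i.+1)%:R * ec A B j.+1 i.+2) else 0).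

Lemma Lu_Qp A B h j : B = h - 1 ->
  Lu (4%:R * h) (Qp A B j.+1) = (4%:R * (h + j%:R)) *: Qp (A + 2%:R) B j + Rr A B j.
Proof.
move=> hB; apply/polyP => i.
rewrite coef_Lu coefD coefZ /Qp /Rr !coef_poly.
case: (ltngtP i j) => hij.
- have h2 : (i.+2 < j.+2)%N by lia.
  have h1 : (i.+1 < j.+2)%N by lia.
  have h0 : (i < j.+1)%N by lia.
  rewrite h2 h1 h0.
  move: (coef_step A i (j - i).-1 hB) => /=.
  have -> : (i + (j - i).-1.+1)%N = j by lia.
  by rewrite -mulrA.
- have h2 : (i.+2 < j.+2)%N = false by lia.
  have h1 : (i.+1 < j.+2)%N = false by lia.
  have h0 : (i < j.+1)%N = false by lia.
  rewrite h2 h1 h0; ring.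
- subst i.
  rewrite ltnn !ltnSn subnn poch0 oner_eq0 addr0 /ec !subnn !poch0.
  rewrite factS natrM fact0.
  have Fj := fact_neq0 R j; have Nj := natS_neq0 R j.
  rewrite -(addn1 j) natrD in Nj *.
  field.
  by rewrite Fj Nj.
Qed.

End Uni3.

Section Uni4.
Variable R : realFieldType.

Definition Fp (h A : R) (j : nat) : {poly R} := poch (h + j%:R) j *: Qp A (h - 1) j.

Lemma Lu_F (h A : R) j :
  Lu (4%:R * h) (Fp h A j.+1) =
  (4%:R * (h + 2%:R * j%:R) * (h + 2%:R * j%:R + 1)) *: Fp h (A + 2%:R) j
  + poch (h + j.+1%:R) j.+1 *: Rr A (h - 1) j.
Proof.
rewrite /Fp LuZ Lu_Qp // scalerDr scalerA scalerA; congr (_ *: _ + _).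
have e1 : poch (h + j.+1%:R) j.+1 * (h + j%:R) = poch (h + j%:R) j.+2.
  rewrite (pochSl (h + j%:R)) mulrC; congr (_ * _).
  by rewrite -addn1 natrD addrA.
rewrite mulrCA e1 !pochS -addn1 natrD; ring.
Qed.

Lemma Lu_F0 (c h A : R) : Lu c (Fp h A 0) = 0.
Proof.
apply/eqP; rewrite -size_poly_leq0.
apply: (leq_trans (size_Lu _ _)).
have : (size (Fp h A 0) <= 1)%N.
  by apply: (leq_trans (size_scale_leq _ _)); apply: size_poly.
by case: (size _).
Qed.

Lemma size_Rr (A B : R) j :
  (size (Rr A B j) <= (jzero (- j.+1%:R - A - B) j.+1).-1)%N.
Proof.
apply/leq_sizeP => i hi; rewrite /Rr coef_poly.
case: ifP => // hij; case: ifP => // /eqP /poch_eq0 [t [ht e]].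
have ex : - j.+1%:R - A - B = (i.+2 + t)%:R.
  apply/eqP; rewrite -subr_eq0 -oppr_eq0 -e; apply/eqP.
  rewrite !natrD; rewrite -(addn1 i.+1) -(addn1 i) -(addn1 j) !natrD; ring.
rewrite (jzero_eq ex) in hi; last by apply/andP; split; lia.
lia.
Qed.

Lemma jzero_shift (x : R) j k :
  ((jzero (x - k%:R) (j - k)).-1 <= jzero x j - k.+1)%N.
Proof.
case: (jzero_spec (x - k%:R) (j - k)) => [->|[e /andP [m0 mj]]] //.
set m := jzero _ _ in e m0 mj *.
have ex : x = (m + k)%:R by rewrite natrD -e; ring.
rewrite (jzero_eq ex); last by apply/andP; split; lia.
lia.
Qed.

Lemma iterF (h A : R) j k : exists q : {poly R},
  (size q <= jzero (- j%:R - A - (h - 1)) j - k)%N /\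
  iter k (Lu (4%:R * h)) (Fp h A j) =
   (if (k <= j)%N then
      (4%:R ^+ k * poch (h + 2%:R * j%:R - 2%:R * k%:R) (2 * k)) *:
        Fp h (A + 2%:R * k%:R) (j - k)
    else 0) + q.
Proof.
elim: k => [|k [q [sq IH]]].
  exists 0; split; first by rewrite size_poly0.
  by rewrite /= expr0 muln0 poch0 mulr1 scale1r mulr0 addr0 subn0 addr0.
rewrite iterS IH LuD.
case: (ltnP k j) => hkj.
- have hk : (k <= j)%N by lia.
  rewrite hk ?hkj.
  have ej : (j - k = (j - k.+1).+1)%N by lia.
  rewrite ej LuZ Lu_F scalerDr scalerA.
  exists (((4%:R ^+ k * poch (h + 2%:R * j%:R - 2%:R * k%:R) (2 * k)) *:
     (poch (h + (j - k.+1).+1%:R) (j - k.+1).+1 *: Rr (A + 2%:R * k%:R) (h - 1) (j - k.+1)))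
     + Lu (4%:R * h) q).
  split.
    apply: (leq_trans (size_polyD _ _)); rewrite geq_max; apply/andP; split.
      apply: (leq_trans (size_scale_leq _ _)).
      apply: (leq_trans (size_scale_leq _ _)).
      apply: (leq_trans (size_Rr _ _ _)).
      have -> : - (j - k.+1).+1%:R - (A + 2%:R * k%:R) - (h - 1) =
                (- j%:R - A - (h - 1)) - k%:R.
        rewrite -ej natrB //; ring.
      rewrite -ej; exact: jzero_shift.
    apply: (leq_trans (size_Lu _ _)); lia.
  rewrite [RHS]addrA; congr (_ + _ + _); congr (_ *: _).
    have -> : (2 * k.+1 = (2 * k).+2)%N by lia.
    rewrite (pochSl _ (2 * k).+1) (pochSl _ (2 * k)) natrB //.
    have -> : h + 2%:R * j%:R - 2%:R * k.+1%:R + 1 + 1 = h + 2%:R * j%:R - 2%:R * k%:R.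
      by rewrite -[k.+1]addn1 natrD; ring.
    rewrite exprS -[k.+1]addn1 natrD; ring.
  congr (Fp _ _ _); rewrite -[k.+1]addn1 natrD; ring.
- exists (Lu (4%:R * h) q); split.
    apply: (leq_trans (size_Lu _ _)); lia.
  case: (leqP k j) => hk.
    have -> : (j - k = 0)%N by lia.
    by rewrite LuZ Lu_F0 scaler0 !add0r.
  by rewrite Lu0 !add0r.
Qed.

End Uni4.



Section Part1.
Variable R : realFieldType.

Lemma poch_zero (a : R) n t : (t < n)%N -> a + t%:R = 0 -> poch a n = 0.
Proof.
move=> tn e; rewrite /poch (bigD1 (Ordinal tn)) //= e mul0r //.
Qed.

Lemma Qp_neg (B : R) s j : (s <= j)%N ->
  Qp (- s%:R) B j = ((j - s)`!%:R / j`!%:R) *: ('X^s * Qp s%:R B (j - s)).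
Proof.
move=> sj; apply/polyP => k.
rewrite coefZ coefXnM /Qp !coef_poly.
case: (ltnP k s) => ks.
  have -> : (k < j.+1)%N by lia.
  rewrite mulr0 /ec (@poch_zero _ _ (s - k.+1)); first by rewrite mul0r.
    by lia.
  rewrite natrB // -(addn1 k) natrD; ring.
have [i ->] : exists i, k = (s + i)%N by exists (k - s)%N; lia.
have -> : (s + i - s = i)%N by lia.
case: (ltnP (s + i) j.+1) => hi; last first.
  have -> : (i < (j - s).+1)%N = false by lia.
  by rewrite mulr0.
have -> : (i < (j - s).+1)%N by lia.
have [r ej] : exists r, j = (s + i + r)%N by exists (j - (s + i))%N; lia.
subst j.
rewrite /ec.
have -> : (s + i + r - (s + i) = r)%N by lia.
have -> : (s + i + r - s - i = r)%N by lia.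
have -> : (s + i + r - s = i + r)%N by lia.
have -> : (s + i)%:R + - s%:R + 1 = i%:R + 1 :> R by rewrite natrD; ring.
have -> : i%:R + s%:R + 1 = (s + i)%:R + 1 :> R by rewrite natrD; ring.
have -> : (i + r)%:R + s%:R + B + i%:R + 1 = (s + i + r)%:R + - s%:R + B + (s + i)%:R + 1 :> R.
  by rewrite !natrD; ring.
set D := poch (_ + _ + B + _ + 1) r.
have e1 := poch_nat R i r; have e2 := poch_nat R (s + i) r.
have Fi := fact_neq0 R i; have Fr := fact_neq0 R r.
have Fsi := fact_neq0 R (s + i); have Fj := fact_neq0 R (s + i + r); have Fir := fact_neq0 R (i + r).
case: (eqVneq D 0) => [->|D0]; first by rewrite !mulr0 !invr0 !mulr0.
rewrite -[poch (i%:R + 1) r](mulfK Fi) -[poch ((s + i)%:R + 1) r](mulfK Fsi) e1 e2.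
field.
by rewrite D0 Fi Fr Fsi Fj.
Qed.

Lemma Fp_neg (h : R) s j : 0 < h -> (s <= j)%N ->
  Fp h (- s%:R) j =
  (poch (1 - (h + 2%:R * j%:R)) j /
     (poch (- j%:R) s * poch (1 - (h + 2%:R * j%:R) + 2%:R * s%:R) (j - s)))
  *: ('X^s * Fp h s%:R (j - s)).
Proof.
move=> h0 sj.
rewrite /Fp Qp_neg // -scalerAr !scalerA; congr (_ *: _).
rewrite (poch_refl (1 - _)) (poch_refl (- j%:R)) (poch_refl (1 - _ + _)).
have -> : - (1 - (h + 2%:R * j%:R)) - j%:R + 1 = h + j%:R by ring.
have -> : - (- j%:R) - s%:R + 1 = (j - s)%:R + 1 :> R by rewrite natrB //; ring.
have -> : - (1 - (h + 2%:R * j%:R) + 2%:R * s%:R) - (j - s)%:R + 1 = h + (j - s)%:R.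
  by rewrite natrB //; ring.
have e1 := poch_nat R (j - s) s.
rewrite subnK // in e1.
set P := poch (h + (j - s)%:R) (j - s).
have P0 : P != 0.
  by rewrite gt_eqF // poch_gt0 // ltr_wpDr.
have Fj := fact_neq0 R j; have Fjs := fact_neq0 R (j - s).
have -> : (-1) ^+ j = (-1) ^+ s * (-1) ^+ (j - s) :> R by rewrite -exprD; congr (_ ^+ _); lia.
rewrite -[poch ((j - s)%:R + 1) s](mulfK Fjs) e1.
have S1 : (-1) ^+ s != 0 :> R by rewrite signr_eq0.
have S2 : (-1) ^+ (j - s) != 0 :> R by rewrite signr_eq0.
field.
by rewrite P0 Fj Fjs S1 S2.
Qed.

End Part1.



Section Multi.
Variable R : realFieldType.
Variable d : nat.
Local Notation MP := {mpoly R[d]}.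
Implicit Types (p q : {poly R}) (t g Y : MP).

Lemma pevalMPD p q t : pevalMP (p + q) t = pevalMP p t + pevalMP q t.
Proof. by rewrite /pevalMP rmorphD hornerD. Qed.

Lemma pevalMPM p q t : pevalMP (p * q) t = pevalMP p t * pevalMP q t.
Proof. by rewrite /pevalMP rmorphM hornerM. Qed.

Lemma pevalMPZ (a : R) p t : pevalMP (a *: p) t = a *: pevalMP p t.
Proof. by rewrite /pevalMP map_polyZ hornerZ mul_mpolyC. Qed.

Lemma pevalMPC (a : R) t : pevalMP a%:P t = a%:MP.
Proof. by rewrite /pevalMP map_polyC hornerC. Qed.

Lemma pevalMPX t : pevalMP 'X t = t.
Proof. by rewrite /pevalMP map_polyX hornerX. Qed.

Lemma pevalMP0 t : pevalMP 0 t = 0.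
Proof. by rewrite /pevalMP map_poly0 horner0. Qed.

Lemma pevalMPXn n t : pevalMP 'X^n t = t ^+ n.
Proof. by rewrite /pevalMP map_polyXn hornerXn. Qed.

Lemma pevalMP_poly n (E : nat -> R) t :
  pevalMP (\poly_(i < n) E i) t = \sum_(i < n) E i *: t ^+ i.
Proof.
rewrite poly_def (big_morph (fun p => pevalMP p t) (fun p q => pevalMPD p q t) (pevalMP0 t)).
by apply: eq_bigr => i _; rewrite pevalMPZ pevalMPXn.
Qed.

Lemma chain p g (i : 'I_d) :
  (pevalMP p g)^`M(i) = pevalMP p^`() g * g^`M(i).
Proof.
elim/poly_ind: p => [|p c IH].
  by rewrite deriv0 !pevalMP0 mderiv0 mul0r.
rewrite pevalMPD pevalMPM pevalMPX pevalMPC mderivD mderivC addr0 mderivM IH.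
rewrite derivMXaddC pevalMPD pevalMPM pevalMPX; ring.
Qed.


Lemma euler_mono (mm : 'X_{1..d}) :
  \sum_(i < d) 'X_i * ('X_[mm] : MP)^`M(i) = 'X_[mm] *+ mdeg mm.
Proof.
rewrite mdegE -sumrMnr; apply: eq_bigr => i _; rewrite mderivX.
have [->|nz] := eqVneq (mm i) 0%N; first by rewrite scale0r mulr0 mulr0n.
rewrite -scalerAr -mpolyXD addmC submK ?lep1mP // scaler_nat //.
Qed.

Lemma euler Y m : Y \is [in R[d], m.-homog] ->
  \sum_(i < d) 'X_i * Y^`M(i) = Y *+ m.
Proof.
move=> hY.
have E := mpolyE Y.
rewrite [in RHS]E [in LHS]E.
under eq_bigr => i _ do rewrite raddf_sum mulr_sumr.
rewrite exchange_big /= -sumrMnl !big_seq; apply: eq_bigr => mm hm.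
under eq_bigr => i _ do rewrite linearZ /= -scalerAr.
rewrite -scaler_sumr euler_mono -scalerMnr (dhomog_mf hY hm) //.
Qed.

Lemma pevalMP1 t : pevalMP 1 t = 1.
Proof. by rewrite /pevalMP rmorph1 hornerC. Qed.

Lemma dX (k i : 'I_d) : ('X_k : MP)^`M(i) = (k == i)%:R.
Proof.
rewrite mderivX mnm1E; case: eqP => [->|_]; last by rewrite scale0r.
have -> : (U_(i) - U_(i) = 0)%MM.
  by apply/mnmP => l; rewrite mnmBE subnn mnm0E.
by rewrite mpolyX0 scale1r.
Qed.

Lemma dnormsq (i : 'I_d) : (normsq R d)^`M(i) = 'X_i *+ 2.
Proof.
rewrite /normsq raddf_sum (bigD1 i) //= big1 ?addr0.
  by rewrite expr2 mderivM dX eqxx mulr1 mul1r.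
by move=> k /negbTE ki; rewrite expr2 mderivM dX ki mulr0 mul0r addr0.
Qed.

Lemma lapV p Y m : Y \is [in R[d], m.-homog] -> lap Y = 0 ->
  lap (pevalMP p (normsq R d - 1) * Y) =
  pevalMP (Lu (4%:R * (m%:R + d%:R / 2%:R)) p) (normsq R d - 1) * Y.
Proof.
move=> hY lY.
set g := normsq R d - 1.
have dg i : g^`M(i) = 'X_i *+ 2.
  by rewrite /g mderivB -mpolyC1 mderivC subr0 dnormsq.
have di i : ((pevalMP p g * Y)^`M(i))^`M(i) =
   pevalMP p^`()^`() g * ('X_i *+ 2) * ('X_i *+ 2) * Y
   + pevalMP p^`() g * 2%:R * Y
   + (pevalMP p^`() g * ('X_i *+ 2) * Y^`M(i)) *+ 2
   + pevalMP p g * Y^`M(i)^`M(i).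
  rewrite !(mderivM, mderivD, chain, dg, mderivMn) dX eqxx /=; ring.
rewrite /lap (eq_bigr _ (fun i _ => di i)) !big_split /=.
have S1 : \sum_(i < d) pevalMP p^`()^`() g * ('X_i *+ 2) * ('X_i *+ 2) * Y
          = pevalMP p^`()^`() g * normsq R d * Y *+ 4.
  rewrite /normsq mulr_sumr mulr_suml -sumrMnl; apply: eq_bigr => i _; ring.
have S2 : \sum_(i < d) pevalMP p^`() g * 2%:R * Y = pevalMP p^`() g * 2%:R * Y *+ d.
  by rewrite sumr_const card_ord.
have S3 : \sum_(i < d) (pevalMP p^`() g * ('X_i *+ 2) * Y^`M(i))
          = pevalMP p^`() g * (Y *+ m) *+ 2.
  have := euler hY => eu.
  rewrite -[in RHS]eu mulr_sumr -!sumrMnl; apply: eq_bigr => i _; ring.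
have S4 : \sum_(i < d) pevalMP p g * Y^`M(i)^`M(i) = 0.
  by rewrite -mulr_sumr -/(lap Y) lY mulr0.
rewrite S1 S2 S3 S4.
have -> : 4%:R * (m%:R + d%:R / 2%:R) = (4 * m + 2 * d)%N%:R :> R.
  by rewrite natrD !natrM; field.
rewrite /Lu pevalMPD !pevalMPZ pevalMPM pevalMPD pevalMPX pevalMP1 !scaler_nat /g.
ring.
Qed.

End Multi.



Section Assemble.
Variable R : realFieldType.
Variable d : nat.
Local Notation MP := {mpoly R[d]}.

Lemma gjacobi_eq (a b : R) j :
  gjacobi a b j = \sum_(0 <= k < j.+1) ec a b j k *: ((2%:R)^-1 *: ('X - 1)) ^+ k.
Proof.
rewrite /gjacobi.
set jz := jzero _ j.
have hjz : (jz <= j.+1)%N.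
  by rewrite /jz; case: (jzero_spec (- j%:R - a - b) j) => [->|[_ /andP [_ h]]] //; lia.
rewrite [in RHS](big_cat_nat (leq0n jz) hjz) /= [X in _ = X + _]big1_seq ?add0r //.
move=> k /andP [_]; rewrite mem_index_iota => /andP [_ kj].
move: kj; rewrite /jz.
case: (jzero_spec (- j%:R - a - b) j) => [->|[e /andP [j0 jj]]] kj //.
set J := jzero _ _ in e j0 jj kj *.
rewrite /ec (@poch_zero _ (j%:R + a + b + k%:R + 1) _ (J - k.+1)); first by rewrite !mulr0 invr0 mulr0 scale0r.
  by lia.
rewrite natrB; last by lia.
rewrite -e -(addn1 k) natrD; ring.
Qed.


Lemma pevalMP_sum_nat m n (F : nat -> {poly R}) (t : MP) :
  pevalMP (\sum_(m <= k < n) F k) t = \sum_(m <= k < n) pevalMP (F k) t.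
Proof.
exact: (big_morph (fun p => pevalMP p t) (fun p q => pevalMPD p q t) (pevalMP0 t)).
Qed.

Lemma pevalMPB (p q : {poly R}) (t : MP) : pevalMP (p - q) t = pevalMP p t - pevalMP q t.
Proof. by rewrite /pevalMP raddfB hornerD hornerN. Qed.

Lemma pevalMP_gjacobi (a b : R) j :
  pevalMP (gjacobi a b j) (2%:R *: normsq R d - 1) =
  pevalMP (Qp a b j) (normsq R d - 1).
Proof.
rewrite gjacobi_eq pevalMP_sum_nat /Qp pevalMP_poly big_mkord.
apply: eq_bigr => k _; rewrite pevalMPZ /pevalMP rmorphXn horner_exp -/(pevalMP _ _).
rewrite pevalMPZ pevalMPB pevalMPX pevalMP1.
have -> : 2%:R *: normsq R d - 1 - 1 = 2%:R *: (normsq R d - 1).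
  by rewrite scalerBr [2%:R *: 1]scaler_nat mulr2n opprD addrA.
by rewrite scalerA mulVf ?scale1r // pnatr_eq0.
Qed.

Lemma PfamE (mu : R) n j (Y : MP) : (2 * j <= n)%N ->
  Pfam mu n j Y =
  pevalMP (Fp ((n - 2 * j)%N%:R + d%:R / 2%:R) mu j) (normsq R d - 1) * Y.
Proof.
move=> hj; rewrite /Pfam hj.
set h := (n - 2 * j)%N%:R + d%:R / 2%:R.
have -> : n%:R - 2%:R * j%:R + d%:R / 2%:R - 1 = h - 1.
  by rewrite /h natrB // natrM.
have -> : n%:R - j%:R + d%:R / 2%:R = h + j%:R.
  by rewrite /h natrB // natrM; ring.
by rewrite pevalMP_gjacobi /Fp pevalMPZ scalerAl.
Qed.

Lemma iter_lap k (p : {poly R}) (Y : MP) m : Y \is [in R[d], m.-homog] -> lap Y = 0 ->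
  iter k (@lap R d) (pevalMP p (normsq R d - 1) * Y) =
  pevalMP (iter k (Lu (4%:R * (m%:R + d%:R / 2%:R))) p) (normsq R d - 1) * Y.
Proof.
move=> hY lY; elim: k => [|k IH] //=.
by rewrite IH (lapV _ hY lY).
Qed.

Lemma pevalMP_shift (q : {poly R}) :
  pevalMP (q \Po ('X - 1)) (normsq R d) = pevalMP q (normsq R d - 1).
Proof.
rewrite /pevalMP map_comp_poly horner_comp -/(pevalMP ('X - 1) _) pevalMPB pevalMPX.
by rewrite pevalMP1.
Qed.

End Assemble.


Unset Implicit Arguments.


Theorem lemma3p2 (R : realFieldType) (d s k n : nat) :
  (0 < d)%N -> (0 < s)%N ->
  (* (i) *)
  (forall (j : nat) (Y : {mpoly R[d]}),
     (s <= j)%N -> (2 * j <= n)%N ->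
     Y \is [in R[d], (n - 2 * j).-homog] -> lap Y = 0 ->
     Pfam (- s%:R) n j Y =
       (poch (1 - n%:R - d%:R / 2%:R) j /
          (poch (- j%:R) s * poch (1 - n%:R - d%:R / 2%:R + 2%:R * s%:R) (j - s)))
       *: ((normsq R d - 1) ^+ s * Pfam s%:R (n - 2 * s) (j - s)%N Y))
  /\
  (* (ii) *)
  (forall (j : nat) (Y : {mpoly R[d]}),
     (2 * j <= n)%N ->
     Y \is [in R[d], (n - 2 * j).-homog] -> lap Y = 0 ->
     exists q : {poly R},
       (size q <= jzero (s%:R + j%:R - n%:R - d%:R / 2%:R + 1 : R) j - k)%N /\
       ((s <= j + k)%N -> q = 0) /\
       iter k (@lap R d) (Pfam (- s%:R) n j Y) =
         (4%:R ^+ k * poch (n%:R + d%:R / 2%:R - 2%:R * k%:R) (2 * k)) *: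
            Pfam (2%:R * k%:R - s%:R) (n - 2 * k) (j%:Z - k%:Z) Y
         + pevalMP q (normsq R d) * Y).
Proof.
move=> d0 s0; split.
- move=> j Y sj hj hY lY.
  rewrite PfamE // (@PfamE _ _ _ (n - 2 * s)); last by lia.
  have -> : (n - 2 * s - 2 * (j - s) = n - 2 * j)%N by lia.
  set h := (n - 2 * j)%N%:R + d%:R / 2%:R.
  have h0 : 0 < h.
    have : (0 : R) < d%:R by rewrite ltr0n.
    have : (0 : R) <= (n - 2 * j)%N%:R by rewrite ler0n.
    rewrite /h; lra.
  rewrite Fp_neg //.
  have -> : 1 - (h + 2%:R * j%:R) = 1 - n%:R - d%:R / 2%:R.
    by rewrite /h natrB ?natrM //; ring.
  by rewrite pevalMPZ pevalMPM pevalMPXn -scalerAl mulrA.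
- move=> j Y hj hY lY.
  rewrite PfamE // (iter_lap _ _ hY lY).
  set h := (n - 2 * j)%N%:R + d%:R / 2%:R.
  have [q [sq eq]] := iterF h (- s%:R) j k.
  rewrite eq.
  have ex : - j%:R - - s%:R - (h - 1) = s%:R + j%:R - n%:R - d%:R / 2%:R + 1.
    by rewrite /h natrB ?natrM //; ring.
  rewrite ex in sq.
  have sz : size (q \Po ('X - 1)) = size q.
    by rewrite size_comp_poly2 // -polyC1 size_XsubC.
  exists (q \Po ('X - 1)); split; first by rewrite sz.
  split.
    move=> sjk; apply/eqP; rewrite -size_poly_leq0 sz.
    apply: (leq_trans sq).
    case: (jzero_spec (s%:R + j%:R - n%:R - d%:R / 2%:R + 1 : R) j) => [->|[e /andP [J0 Jj]]] //.
    set J := jzero _ _ in e J0 Jj *.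
    suff : (J < k.+1)%N by lia.
    rewrite -(ltr_nat R) -e.
    have : (0 : R) < d%:R by rewrite ltr0n.
    have : (s%:R : R) <= j%:R + k%:R by rewrite -natrD ler_nat.
    have : ((2 * j)%N%:R : R) <= n%:R by rewrite ler_nat.
    rewrite natrM -(addn1 k) natrD; lra.
  rewrite pevalMP_shift pevalMPD mulrDl; congr (_ + _).
  case: (leqP k j) => hk.
    have -> : (j%:Z - k%:Z) = (j - k)%N :> int by lia.
    rewrite (@PfamE _ _ _ (n - 2 * k)); last by lia.
    have -> : (n - 2 * k - 2 * (j - k) = n - 2 * j)%N by lia.
    rewrite -/h pevalMPZ -scalerAl; congr (_ *: _).
      rewrite /h natrB ?natrM //; congr (_ * poch _ _); ring.
    by congr (pevalMP (Fp _ _ _) _ * _); ring.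
  have -> : (j%:Z - k%:Z) = Negz (k - j).-1 :> int by lia.
  by rewrite /= pevalMP0 mul0r scaler0.
Qed.
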